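(* Let $k$ be a field and $(A,(I_i^\pm)_{i=1,\ldots,n})$ a good $n$-fold cubical algebra over $k$. Put $A':=I_1^0$ and $J_{i-1}^\pm:=I_i^\pm\cap I_1^0$ for $i=2,\ldots,n$. (1) Then $(A',(J_i^\pm)_{i=1,\ldots,n-1})$ is a good $(n-1)$-fold cubical algebra, and $A'$ and $A$ have the same trace-class operators. (2) The natural homomorphism $I_{tr}/[I_{tr},I_{tr}]\to I_{tr}/[I_{tr},A]$ is an isomorphism.
   Context: Algebras are associative but not necessarily unital; algebra morphisms need not preserve units. A Beilinson $n$-fold cubical algebra over $k$ is an associative $k$-algebra $A$ together with two-sided ideals $I_i^+,I_i^-$ ($i=1,\ldots,n$) such that $I_i^++I_i^-=A$ for each $i$; one sets $I_i^0:=I_i^+\cap I_i^-$ and $I_{tr}:=\bigcap_{i=1}^nI_i^0$ (the trace-class operators). An algebra $B$ is locally left (resp. right) unital if for every finite subset $S\subseteq B$ there is $e_S\in B$ with $e_Sa=a$ (resp. $ae_S=a$) for all $a\in S$; locally bi-unital if both hold. The cubical algebra is good if for every $c=1,\ldots,n$ the intersection $I_1^0\cap\cdots\cap I_c^0$ is locally bi-unital. $[X,Y]$ denotes the $k$-span of commutators $xy-yx$. *)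

(* Defs.v *)
(* Non-unital associative algebras over a field k are
   modelled as an lmodType k together with an associative bilinear product.
   Subalgebras / ideals are predicates (A -> Prop) on the ambient carrier. *)
From HB Require Import structures.
From mathcomp Require Import all_boot all_order all_algebra.
Set Implicit Arguments. Unset Strict Implicit. Unset Printing Implicit Defensive.
Import GRing.Theory.
Local Open Scope ring_scope.

Section NUAlg.
Variables (k : fieldType) (A : lmodType k) (mul : A -> A -> A).

Definition is_nualg : Prop :=
  (forall x y z, mul x (mul y z) = mul (mul x y) z) /\
  (forall c x y z, mul (c *: x + y) z = c *: mul x z + mul y z) /\
  (forall c x y z, mul z (c *: x + y) = c *: mul z x + mul z y).

Definition setA : A -> Prop := fun _ => True.

Definition is_subalg (S : A -> Prop) : Prop :=
  S 0 /\ (forall x y, S x -> S y -> S (x + y)) /\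
  (forall (c : k) x, S x -> S (c *: x)) /\
  (forall x y, S x -> S y -> S (mul x y)).

Definition is_ideal (S I : A -> Prop) : Prop :=
  (forall x, I x -> S x) /\ I 0 /\ (forall x y, I x -> I y -> I (x + y)) /\
  (forall (c : k) x, I x -> I (c *: x)) /\
  (forall s x, S s -> I x -> I (mul s x) /\ I (mul x s)).

Definition cubical (S : A -> Prop) (n : nat) (Ip Im : nat -> A -> Prop) : Prop :=
  forall i, (1 <= i <= n)%N ->
    [/\ is_ideal S (Ip i), is_ideal S (Im i) &
        forall a, S a -> exists x y, [/\ Ip i x, Im i y & a = x + y]].

Definition I0 (Ip Im : nat -> A -> Prop) (i : nat) : A -> Prop :=
  fun x => Ip i x /\ Im i x.

Definition Icap (S : A -> Prop) (Ip Im : nat -> A -> Prop) (c : nat) : A -> Prop :=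
  fun x => S x /\ forall i, (1 <= i <= c)%N -> I0 Ip Im i x.

Definition Itr (S : A -> Prop) (n : nat) (Ip Im : nat -> A -> Prop) : A -> Prop :=
  Icap S Ip Im n.

Definition loc_left_unital (B : A -> Prop) : Prop :=
  forall s : seq A, (forall a, a \in s -> B a) ->
    exists e, B e /\ forall a, a \in s -> mul e a = a.

Definition loc_right_unital (B : A -> Prop) : Prop :=
  forall s : seq A, (forall a, a \in s -> B a) ->
    exists e, B e /\ forall a, a \in s -> mul a e = a.

Definition loc_biunital (B : A -> Prop) : Prop :=
  loc_left_unital B /\ loc_right_unital B.

Definition good (S : A -> Prop) (n : nat) (Ip Im : nat -> A -> Prop) : Prop :=
  cubical S n Ip Im /\
  forall c, (1 <= c <= n)%N -> loc_biunital (Icap S Ip Im c).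

Inductive comm_span (X Y : A -> Prop) : A -> Prop :=
| cs_0 : comm_span X Y 0
| cs_comm x y : X x -> Y y -> comm_span X Y (mul x y - mul y x)
| cs_add u v : comm_span X Y u -> comm_span X Y v -> comm_span X Y (u + v)
| cs_scale (c : k) u : comm_span X Y u -> comm_span X Y (c *: u).

(* The natural map T/[T,T] -> T/[T,S] (induced by the identity of T) is a
   well-defined bijection; quotients are presented as T modulo the
   congruences x ~ y <-> x - y \in [T,T] (resp. [T,S]).  The map is k-linear
   by construction, so this says it is an isomorphism of k-vector spaces. *)
Definition natural_map_iso (T S : A -> Prop) : Prop :=
  [/\ (forall x y, T x -> T y -> comm_span T T (x - y) -> comm_span T S (x - y)),
      (forall x y, T x -> T y -> comm_span T S (x - y) -> comm_span T T (x - y)) &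
      (forall y, T y -> exists x, T x /\ comm_span T S (x - y))].

End NUAlg.

(* Main.v *)
Require Import Defs.
From HB Require Import structures.
From mathcomp Require Import all_boot all_order all_algebra.
Import GRing.Theory.
Local Open Scope ring_scope.

Lemma icap_shift (k : fieldType) (A : lmodType k) (Ip Im : nat -> A -> Prop) c x :
  Icap (I0 Ip Im 1) (fun j x => Ip j.+1 x /\ I0 Ip Im 1 x)
       (fun j x => Im j.+1 x /\ I0 Ip Im 1 x) c x <->
  Icap (@setA k A) Ip Im c.+1 x.
Proof.
split.
- move=> [HA H]; split => // i /andP [Hi1 Hi2].
  case: i Hi1 Hi2 => [|[|j]] // _ Hj.
  have := H j.+1 (Hj : (1 <= j.+1 <= c)%N).
  by move=> [[? _] [? _]].
- move=> [_ H]; split; first by apply: H.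
  move=> i /andP [Hi1 Hi2].
  have H1 : I0 Ip Im 1 x by apply: H.
  have := H i.+1; rewrite /= ltnS Hi2 => /(_ isT) [? ?].
  by split; split.
Qed.

Theorem mainTheorem9 (k : fieldType) (A : lmodType k) (mul : A -> A -> A)
    (n : nat) (Ip Im : nat -> A -> Prop) :
  is_nualg mul -> (1 <= n)%N ->
  good mul (@setA k A) n Ip Im ->
  let A' := I0 Ip Im 1 in
  let Jp := fun j x => Ip j.+1 x /\ A' x in
  let Jm := fun j x => Im j.+1 x /\ A' x in
  ([/\ is_subalg mul A',
       good mul A' n.-1 Jp Jm &
       forall x, Itr A' n.-1 Jp Jm x <-> Itr (@setA k A) n Ip Im x])
  /\ natural_map_iso mul (Itr (@setA k A) n Ip Im) (@setA k A).
Proof.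
move=> [Hass [HlinL HlinR]] Hn [Hcub Hgood] A' Jp Jm.
have Hi1 : (1 <= 1 <= n)%N by rewrite Hn.
have [[_ [Hp0 [HpD [HpZ HpM]]]] [_ [Hm0 [HmD [HmZ HmM]]]] _] := Hcub 1 Hi1.
have HA'id : forall s x, A' x -> A' (mul s x) /\ A' (mul x s).
  move=> s x [H1 H2].
  have [? ?] := HpM s x I H1; have [? ?] := HmM s x I H2.
  by split; split.
have HA'D : forall x y, A' x -> A' y -> A' (x + y).
  by move=> x y [? ?] [? ?]; split; [apply: HpD|apply: HmD].
have HA'Z : forall (c : k) x, A' x -> A' (c *: x).
  by move=> c x [? ?]; split; [apply: HpZ|apply: HmZ].
have Hn1 : n.-1.+1 = n by rewrite prednK.
split; first split.
- split; first by split.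
  split; first by move=> x y [? ?] [? ?]; split; [apply: HpD|apply: HmD].
  split; first by move=> c x [? ?]; split; [apply: HpZ|apply: HmZ].
  by move=> x y _ Hy; case: (HA'id x y Hy).
- split.
  + move=> i /andP [Hi Hin].
    have Hi' : (1 <= i.+1 <= n)%N by apply/andP; split => //; rewrite -Hn1 ltnS.
    have [[_ [Pp0 [PpD [PpZ PpM]]]] [_ [Pm0 [PmD [PmZ PmM]]]] Hsplit] := Hcub _ Hi'.
    split.
    * split; first by move=> x [].
      split; first by split.
      split; first by move=> x y [? ?] [? ?]; split; [apply: PpD|apply: HA'D].
      split; first by move=> c x [? ?]; split; [apply: PpZ|apply: HA'Z].
      move=> s x _ [Hx HAx].
      have [? ?] := PpM s x I Hx; have [? ?] := HA'id s x HAx.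
      by split; split.
    * split; first by move=> x [].
      split; first by split.
      split; first by move=> x y [? ?] [? ?]; split; [apply: PmD|apply: HA'D].
      split; first by move=> c x [? ?]; split; [apply: PmZ|apply: HA'Z].
      move=> s x _ [Hx HAx].
      have [? ?] := PmM s x I Hx; have [? ?] := HA'id s x HAx.
      by split; split.
    * move=> a Ha.
      have [Hl _] := Hgood 1 Hi1.
      have Hcap : Icap (@setA k A) Ip Im 1 a.
        split => // j /andP [Hj1 Hj2].
        have -> : j = 1%N by apply/eqP; rewrite eqn_leq Hj1 Hj2.
        exact: Ha.
      have [e [_ Hea]] := Hl [:: a] (fun b Hb => ltac:(move: Hb; rewrite inE => /eqP ->; exact: Hcap)).
      have [x [y [Hx Hy Hexy]]] := Hsplit e I.
      exists (mul x a), (mul y a).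
      have [_ ?] := PpM a x I Hx; have [_ ?] := PmM a y I Hy.
      have [? _] := HA'id x a Ha; have [? _] := HA'id y a Ha.
      split; try by split.
      rewrite -{1}(Hea a (mem_head _ _)) Hexy.
      by have := HlinL 1 x y a; rewrite !scale1r.
  + move=> c /andP [Hc Hcn].
    have Hc' : (1 <= c.+1 <= n)%N by apply/andP; split => //; rewrite -Hn1 ltnS.
    have [Hl Hr] := Hgood _ Hc'.
    split.
    * move=> s Hs.
      have [e [He H]] := Hl s (fun a Ha => proj1 (icap_shift _ _ Ip Im c a) (Hs a Ha)).
      by exists e; split => //; apply/icap_shift.
    * move=> s Hs.
      have [e [He H]] := Hr s (fun a Ha => proj1 (icap_shift _ _ Ip Im c a) (Hs a Ha)).
      by exists e; split => //; apply/icap_shift.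
- move=> x; rewrite /Itr; rewrite -{2}Hn1; exact: icap_shift.
set T := Itr (@setA k A) n Ip Im.
have HTid : forall s x, T x -> T (mul s x) /\ T (mul x s).
  move=> s x [_ Hx].
  split; split => // i Hi; have [[_ [_ [_ [_ PpM]]]] [_ [_ [_ [_ PmM]]]] _] := Hcub i Hi;
    have [Hp Hm] := Hx i Hi; have [? ?] := PpM s x I Hp; have [? ?] := PmM s x I Hm;
    by split.
have key : forall t a, T t -> comm_span mul T T (mul t a - mul a t).
  move=> t a Ht.
  have [_ Hr] := Hgood n (ltac:(by rewrite Hn leqnn)).
  have [e [He Hte]] := Hr [:: t] (fun b Hb => ltac:(move: Hb; rewrite inE => /eqP ->; exact: Ht)).
  have Hte' : mul t e = t by apply: Hte; rewrite mem_head.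
  have -> : mul t a - mul a t =
     (mul t (mul e a) - mul (mul e a) t) + (mul e (mul a t) - mul (mul a t) e).
    rewrite Hass Hte' -Hass -Hass Hte'.
    by rewrite addrA subrK.
  have [_ Hea] := HTid a e He.
  have [Hat _] := HTid a t Ht.
  apply: cs_add; apply: cs_comm => //.
split.
- move=> x y _ _; elim => [|u v Hu Hv|u v _ Hu _ Hv|c u _ Hu].
  + exact: cs_0.
  + exact: cs_comm.
  + exact: cs_add.
  + exact: cs_scale.
- move=> x y _ _; elim => [|u v Hu Hv|u v _ Hu _ Hv|c u _ Hu].
  + exact: cs_0.
  + exact: key.
  + exact: cs_add.
  + exact: cs_scale.
- move=> y Hy; exists y; split => //; rewrite subrr; exact: cs_0.
Qed.
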